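(* In the setting described in the context, let $D\subseteq A\subseteq D\cup T$ and $L\in\Pi_A$. Then $\dim\operatorname{span}\langle L,L^*\rangle_A=|L|$ if $L$ is shorted (with respect to $A$), and $\dim\operatorname{span}\langle L,L^*\rangle_A=2|L|-1$ otherwise.
   Context: Let $n\ge4$, $V=\{0,\dots,n-1\}$, and let $E=\{(u,v)\in V\times V:u\ne v\}$ be the set of arcs, written $uv$. Let $\chi_e\in\mathbb R^E$ be unit vectors and $\chi_F=\sum_{e\in F}\chi_e$. Let $\delta^\pm(w)$ be the arcs leaving/entering $w$, let $\delta^+(S)=\{uv:u\in S,v\notin S\}$, let $\mathcal S=\{S\subset V:2\le|S|\le n-2\}$, and let $x(F)=\sum_{e\in F}x_e$. The polytope is $P^n=\{x\in\mathbb R^E: x(\delta^+(w))=x(\delta^-(w))=1\ \forall w,\ x(\delta^+(S))\ge1\ \forall S\in\mathcal S,\ x\ge0\}$. Fix $\bar x\in P^n\cap\{0,\tfrac12\}^E$ and let $E_{\bar x}=\{e:\bar x_e=\tfrac12\}$. For $a\in\{0,1\}^E$ let $\mathrm{pr}(a)=\sum_{e\in E_{\bar x}}a_e\chi_e$. Let $\mathcal S_{\bar x}=\{S\in\mathcal S:\bar x(\delta^+(S))=1\}$. Define the sets $$D=\{\mathrm{pr}(\chi_{\delta^+(u)}),\mathrm{pr}(\chi_{\delta^-(u)}):u\in V\}, \qquad T=\{\mathrm{pr}(\chi_{\delta^+(S)}):S\in\mathcal S_{\bar x}\}.$$ Every vector of $D\cup T$ equals $\chi_{e_1}+\chi_{e_2}$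 for two distinct arcs $e_1,e_2\in E_{\bar x}$; it is written $[e_1,e_2]=[e_2,e_1]$. Let $A$ be a set with $D\subseteq A\subseteq D\cup T$. On $E_{\bar x}$ define the relation $e\sim_A e'$ iff there is $\bar e\in E_{\bar x}$ with $[e,\bar e]\in A$ and $[\bar e,e']\in A$. Let $\equiv_A$ be its transitive closure; this is an equivalence relation. The equivalence classes are called circuits, and they form the circuit partition $\Pi_A$ of $E_{\bar x}$. For $L\in\Pi_A$, the set $\{\bar e\in E_{\bar x}:\exists e\in L,\ [e,\bar e]\in A\}$ is nonempty and contained in a unique circuit, denoted $L^*_A$ and called the dual of $L$. The pair $\{L,L^*_A\}$ is a circuit pair. $L$ is called shorted if $L^*_A=L$. Define $\langle L,L^*\rangle_A=\{[e,\bar e]\in A: e\in L,\ \bar e\in L^*_A\}$. *)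

(* Defs.v *)
From HB Require Import structures.
From mathcomp Require Import all_boot all_order all_algebra.
From Stdlib Require Import Relation_Operators.
Set Implicit Arguments. Unset Strict Implicit. Unset Printing Implicit Defensive.
Import Order.TTheory GRing.Theory Num.Theory.
Local Open Scope ring_scope.

Definition darc (n : nat) := {p : 'I_n * 'I_n | p.1 != p.2}.

(* vectors of R^E ; R^o carries the vectType structure *)
Definition vec (R : realFieldType) (n : nat) := {ffun darc n -> R^o}.

Section Defs.
Variables (R : realFieldType) (n : nat).

Definition tl (e : darc n) : 'I_n := (val e).1.
Definition hd (e : darc n) : 'I_n := (val e).2.

Definition chi (F : {set darc n}) : vec R n := [ffun e => (e \in F)%:R].

Definition delta_out (w : 'I_n) : {set darc n} := [set e | tl e == w].
Definition delta_in (w : 'I_n) : {set darc n} := [set e | hd e == w].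
Definition delta_outS (S : {set 'I_n}) : {set darc n} :=
  [set e | (tl e \in S) && (hd e \notin S)].

Definition xsum (x : vec R n) (F : {set darc n}) : R := \sum_(e in F) x e.

Definition inSS (S : {set 'I_n}) : bool := (2 <= #|S|)%N && (#|S| <= n - 2)%N.

Definition inPn (x : vec R n) : Prop :=
  [/\ forall w, xsum x (delta_out w) = 1,
      forall w, xsum x (delta_in w) = 1,
      forall S, inSS S -> 1 <= xsum x (delta_outS S)
    & forall e, 0 <= x e].

Definition half_integral (x : vec R n) : Prop :=
  forall e, x e = 0 \/ x e = 2^-1.

Definition Ehalf (x : vec R n) : {set darc n} := [set e | x e == 2^-1].

Definition pr (x : vec R n) (a : vec R n) : vec R n :=
  [ffun e => if e \in Ehalf x then a e else 0].

Definition inSx (x : vec R n) (S : {set 'I_n}) : Prop :=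
  inSS S /\ xsum x (delta_outS S) = 1.

Definition inD (x : vec R n) (v : vec R n) : Prop :=
  exists u, v = pr x (chi (delta_out u)) \/ v = pr x (chi (delta_in u)).

Definition inT (x : vec R n) (v : vec R n) : Prop :=
  exists S, inSx x S /\ v = pr x (chi (delta_outS S)).

(* [e1, e2] = chi_{e1} + chi_{e2} (for distinct e1, e2) *)
Definition pairv (e1 e2 : darc n) : vec R n := chi [set e1; e2].

(* [e1,e2] \in A, where the notation presupposes distinct arcs of E_x *)
Definition inA (x : vec R n) (A : pred (vec R n)) (e1 e2 : darc n) : bool :=
  [&& e1 \in Ehalf x, e2 \in Ehalf x, e1 != e2 & pairv e1 e2 \in A].

Definition simA (x : vec R n) (A : pred (vec R n)) (e e' : darc n) : bool :=
  [&& e \in Ehalf x, e' \in Ehalf x &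
      [exists eb, (eb \in Ehalf x) && inA x A e eb && inA x A eb e']].

Definition equivA (x : vec R n) (A : pred (vec R n)) (e e' : darc n) : Prop :=
  Relation_Operators.clos_trans _ (fun a b => simA x A a b) e e'.

Definition circuit (x : vec R n) (A : pred (vec R n)) (L : {set darc n}) : Prop :=
  exists e, e \in Ehalf x /\ forall e', e' \in L <-> equivA x A e e'.

Definition is_dual (x : vec R n) (A : pred (vec R n)) (L M : {set darc n}) : Prop :=
  circuit x A M /\ forall e eb, e \in L -> inA x A e eb -> eb \in M.

Definition bracket (x : vec R n) (A : pred (vec R n)) (L M : {set darc n})
  : seq (vec R n) :=
  [seq pairv e eb | e <- enum L, eb <- [seq f <- enum M | inA x A e f]].

End Defs.

(* Main.v *)
Require Import Defs.
From HB Require Import structures.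
From mathcomp Require Import all_boot all_order all_algebra.
From Stdlib Require Import Relation_Operators.
From mathcomp Require Import lra zify.
Import Order.TTheory GRing.Theory Num.Theory.
Local Open Scope ring_scope.
Section Tri.
Variables (R : realFieldType) (n : nat).
Lemma scaleE (k : R) (v : vec R n) g : (k *: v) g = k * v g.
Proof. by rewrite ffunE. Qed.
Lemma span_eval0 (X : seq (vec R n)) g :
  (forall v, v \in X -> v g = 0) -> forall w, w \in <<X>>%VS -> w g = 0.
Proof.
elim: X => [|u X IH] H w.
  by rewrite span_nil memv0 => /eqP ->; rewrite ffunE.
rewrite span_cons => /memv_addP [a /vlineP [k ->] [b Hb ->]].
rewrite ffunE scaleE H ?mem_head // mulr0 add0r IH // => v Hv.
by apply: H; rewrite in_cons Hv orbT.
Qed.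

Variable F : darc n -> vec R n.
Fixpoint triF (r : seq (darc n)) : bool :=
  if r is g :: r' then [&& F g g != 0, all (fun h => F h g == 0) r' & triF r']
  else true.

Lemma triF_free r : triF r -> free (map F r).
Proof.
elim: r => [|g r IH] /=; first by rewrite /free span_nil dimv0.
case/and3P=> Hg /allP Hall /IH Hf; rewrite free_cons Hf andbT.
apply/negP => Hin; move: Hg; rewrite (@span_eval0 _ g _ _ Hin) ?eqxx //.
by move=> v /mapP [h Hh ->]; apply/eqP/Hall.
Qed.

Lemma triF_cat r t : triF (r ++ t) =
  [&& triF r, triF t & all (fun g => all (fun h => F h g == 0) t) r].
Proof.
elim: r => [|g r IH] /=; first by rewrite andbT.
rewrite IH all_cat; case: (F g g != 0) => //=.
by case: (all _ r); case: (all _ t); case: (triF r); case: (triF t); case: (all _ r).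
Qed.

Lemma triF_diag r : uniq r -> (forall g, g \in r -> F g g != 0) ->
  (forall g h, g \in r -> h \in r -> g != h -> F h g = 0) -> triF r.
Proof.
elim: r => [|g r IH] //= /andP [gr ur] H1 H2.
rewrite H1 ?mem_head //= IH ?andbT.
- apply/allP => h hr; apply/eqP/H2; rewrite ?mem_head ?in_cons ?hr ?orbT //.
  by apply/eqP => E; move: gr; rewrite E hr.
- by [].
- by move=> h hr; apply: H1; rewrite in_cons hr orbT.
- by move=> a b ar br; apply: H2; rewrite in_cons ?ar ?br orbT.
Qed.
End Tri.

Section Basics.
Variables (R : realFieldType) (n : nat) (x : vec R n) (A : pred (vec R n)).
Hypotheses (hP : inPn x) (hh : half_integral x)
  (hD : forall v, inD x v -> v \in A).

Local Notation E := (Ehalf x).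
Definition ev (g : darc n) : vec R n := chi R [set g].

Lemma evE g h : ev g h = (h == g)%:R.
Proof. by rewrite ffunE inE. Qed.

Lemma pairvE a b : a != b -> pairv R a b = ev a + ev b.
Proof.
move=> ab; apply/ffunP=> h; rewrite !ffunE !inE.
have [->|ha] := eqVneq h a; first by rewrite (negbTE ab) /= addr0.
by rewrite add0r.
Qed.

Lemma two_neq0 : (2 : R) != 0.
Proof. by rewrite pnatr_eq0. Qed.

Definition S u := delta_out u :&: E.

Lemma cardS u : #|S u| = 2%N.
Proof.
case: hP => Hout _ _ _; have := Hout u; rewrite /xsum (big_setID E) /=.
rewrite [X in _ + X]big1 ?addr0; last first.
  move=> e; rewrite !inE => /andP [/negP he _].
  by case: (hh e) => // E2; case: he; rewrite E2.
rewrite (eq_bigr (fun _ => 2^-1)); last by move=> e; rewrite !inE => /andP [_ /eqP].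
rewrite sumr_const -/(S u) => H.
have : (#|S u|%:R : R) = 2%:R.
  apply: (mulIf (invr_neq0 two_neq0)); rewrite mulfV ?two_neq0 //.
  move: H; rewrite -mulr_natl; lra.
by move/eqP; rewrite eqr_nat => /eqP.
Qed.

Definition sig g := odflt g [pick f in S (tl g) :\ g].

Lemma sig_spec {g} : g \in E ->
  [/\ sig g \in E, tl (sig g) = tl g, sig g != g & S (tl g) = [set g; sig g]].
Proof.
move=> gE.
have gS : g \in S (tl g) by rewrite /S in_setI gE andbT inE.
have c1 : #|S (tl g) :\ g| = 1%N.
  by have := cardsD1 g (S (tl g)); rewrite gS cardS => /eqP; rewrite eqSS => /eqP.
rewrite /sig; case: pickP => [f Hf | H]; last first.
  by move: c1; rewrite (eq_card0 H).
move: (Hf); rewrite !inE => /andP [fg /andP [/eqP tf fE]].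
rewrite fE tf fg; split => //.
apply/eqP; rewrite eq_sym eqEcard cardS cards2 eq_sym fg andbT.
apply/subsetP => y; rewrite !inE /= => /orP [/eqP -> | /eqP ->].
  by move: gS; rewrite /S !inE.
by rewrite tf eqxx fE.
Qed.

Lemma sig_E g : g \in E -> sig g \in E.
Proof. by case/sig_spec. Qed.

Lemma sig_inA g : g \in E -> inA x A g (sig g).
Proof.
move=> gE; have [sE ts ns HS] := sig_spec gE.
rewrite /inA gE sE eq_sym ns /=; apply: hD; exists (tl g); left.
apply/ffunP => h; rewrite !ffunE -HS !inE.
by case: (x h == 2^-1); rewrite ?andbT ?andbF.
Qed.

Lemma sig_inj : {in E &, injective sig}.
Proof.
move=> a b aE bE eab.
have [_ ta na Sa] := sig_spec aE; have [_ tb nb Sb] := sig_spec bE.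
have : a \in S (tl b) by rewrite /S in_setI aE andbT inE -ta eab tb.
rewrite Sb !inE => /orP [/eqP // | /eqP abs].
by move: na; rewrite eab -abs eqxx.
Qed.

Lemma inA_sym a b : inA x A a b = inA x A b a.
Proof.
by rewrite /inA /pairv (setUC [set a]) (eq_sym a); case: (a \in E); case: (b \in E).
Qed.

Lemma inA_neq a b : inA x A a b -> a != b.
Proof. by case/and4P. Qed.

Lemma inA_E a b : inA x A a b -> (a \in E) && (b \in E).
Proof. by case/and4P => -> ->. Qed.

Lemma simA_symI a b : simA x A a b -> simA x A b a.
Proof.
case/and3P => aE bE /existsP [c /andP [/andP [cE h1] h2]].
rewrite /simA bE aE /=; apply/existsP; exists c.
by rewrite cE (inA_sym b c) h2 (inA_sym c a) h1.
Qed.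

Lemma equivA_sym a b : equivA x A a b -> equivA x A b a.
Proof.
elim => [a' b' H | a' b' c' _ IH1 _ IH2].
  by apply: t_step; apply: simA_symI.
exact: t_trans IH2 IH1.
Qed.

Lemma equivA_E a b : equivA x A a b -> b \in E.
Proof. by elim => [a' b' /and3P [] | ]. Qed.

Lemma simA_refl a : a \in E -> simA x A a a.
Proof.
move=> aE; rewrite /simA aE /=; apply/existsP; exists (sig a).
by rewrite sig_E // sig_inA //= inA_sym sig_inA.
Qed.
Variables (L Lstar : {set darc n}) (e0 : darc n).
Hypotheses (he0 : e0 \in Ehalf x) (hL : forall e', e' \in L <-> equivA x A e0 e')
  (hLs : circuit x A Lstar)
  (hN : forall e eb, e \in L -> inA x A e eb -> eb \in Lstar).


Lemma e0L : e0 \in L.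
Proof. by apply/hL; apply: t_step; apply: simA_refl. Qed.

Lemma L_closed a b : a \in L -> equivA x A a b -> b \in L.
Proof. by move/hL => H1 H2; apply/hL; apply: t_trans H1 H2. Qed.

Lemma LE a : a \in L -> a \in E.
Proof. by move/hL; apply: equivA_E. Qed.

Definition N := [set f | [exists l in L, inA x A l f]].

Lemma NP f : reflect (exists2 l, l \in L & inA x A l f) (f \in N).
Proof. by rewrite inE; apply: exists_inP. Qed.

Definition W := (<< bracket x A L Lstar >>)%VS.

Lemma memW_edge l f : l \in L -> inA x A l f -> ev l + ev f \in W.
Proof.
move=> lL h; rewrite -pairvE ?inA_neq //; apply: memv_span.
apply/allpairsPdep; exists l, f; split => //; first by rewrite mem_enum.
by rewrite mem_filter h mem_enum (hN _ _ lL h).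
Qed.

Lemma memW_diff a b : a \in L -> equivA x A a b -> ev a - ev b \in W.
Proof.
move=> aL H; elim: H aL => [a' b' Hs | a' b' c' H1 IH1 H2 IH2] aL.
  have bL : b' \in L by apply: (L_closed _ _ aL); apply: t_step.
  case/and3P: Hs => _ _ /existsP [c /andP [/andP [_ hac] hcb]].
  have h1 := memW_edge _ _ aL hac.
  have h2 := memW_edge _ _ bL (etrans (inA_sym _ _) hcb).
  have -> : ev a' - ev b' = (ev a' + ev c) - (ev b' + ev c)
    by rewrite opprD addrACA subrr addr0.
  exact: memvB.
have bL := L_closed _ _ aL H1.
by have := memvD (IH1 aL) (IH2 bL); rewrite addrA subrK.
Qed.

Lemma memW_diffL a b : a \in L -> b \in L -> ev a - ev b \in W.
Proof.
move=> /hL Ha /hL Hb.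
have := memvB (memW_diff _ _ e0L Hb) (memW_diff _ _ e0L Ha).
by rewrite opprB addrC addrA subrK.
Qed.

Lemma memW_LN l f : l \in L -> f \in N -> ev l + ev f \in W.
Proof.
move=> lL /NP [l1 l1L h].
by have := memvD (memW_diffL _ _ lL l1L) (memW_edge _ _ l1L h); rewrite addrA subrK.
Qed.

Lemma NE f : f \in N -> f \in E.
Proof. by case/NP => l _ /inA_E /andP []. Qed.

Lemma sigL_N l : l \in L -> sig l \in N.
Proof. by move=> lL; apply/NP; exists l => //; apply: sig_inA; apply: LE. Qed.

Lemma sigN_L f : f \in N -> sig f \in L.
Proof.
move=> fN; have fE := NE _ fN; case/NP: fN => l lL h.
apply: (L_closed _ _ lL); apply: t_step.
rewrite /simA (LE _ lL) (sig_E _ fE) /=; apply/existsP; exists f.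
by rewrite fE h sig_inA.
Qed.

Lemma N_Lstar f : f \in N -> f \in Lstar.
Proof. by case/NP => l lL h; apply: hN _ _ lL h. Qed.

Lemma NL_eq f : f \in N -> f \in L -> Lstar = L.
Proof.
move=> fN fL; case: hLs => e1 [_ hL1].
have H1 := proj1 (hL1 f) (N_Lstar _ fN); have H0 := proj1 (hL f) fL.
apply/setP => g; apply/idP/idP.
  move/hL1 => Hg; apply/hL.
  apply: t_trans; first apply: t_trans; [exact: H0 | exact: (equivA_sym _ _ H1) | exact: Hg].
move/hL => Hg; apply/hL1.
apply: t_trans; first apply: t_trans; [exact: H1 | exact: (equivA_sym _ _ H0) | exact: Hg].
Qed.


Lemma main_dim : \dim W = (if Lstar == L then #|L| else (2 * #|L|).-1)%N.
Proof.
case: eqP => HLs.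
  have fr : free (map ev (enum L)).
    apply: triF_free; apply: triF_diag; first exact: enum_uniq.
      by move=> g _; rewrite evE eqxx oner_neq0.
    by move=> g h _ _ gh; rewrite evE (negbTE gh).
  have -> : W = <<map ev (enum L)>>%VS.
    apply/eqP; rewrite eqEsubv; apply/andP; split; apply/span_subvP => v.
      case/allpairsPdep => l [f [lE fE ->]]; move: lE fE.
      rewrite mem_enum mem_filter mem_enum => lL /andP [h fLs].
      rewrite HLs in fLs.
      rewrite pairvE ?(inA_neq _ _ h) //; apply: memvD; apply: memv_span;
        apply: map_f; rewrite mem_enum //.
    case/mapP => g; rewrite mem_enum => gL ->.
    have fN := sigL_N _ gL.
    have fL : sig g \in L by rewrite -HLs N_Lstar.
    have h1 := memW_LN _ _ gL fN; have h2 := memW_diffL _ _ gL fL.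
    have -> : ev g = 2^-1 *: ((ev g + ev (sig g)) + (ev g - ev (sig g))).
      by rewrite addrACA subrr addr0 -mulr2n -scaler_nat scalerA mulVf ?two_neq0 ?scale1r.
    exact: memvZ (memvD h1 h2).
  by rewrite (eqP fr) size_map -cardE.
have f0N := sigL_N _ e0L; set f0 := sig e0 in f0N *.
have NL g : g \in N -> g \notin L.
  by move=> gN; apply/negP => gL; apply: HLs; exact: NL_eq _ gN gL.
have f0L := NL _ f0N.
have e0f0 : e0 != f0 by apply/eqP => E0; move: f0L; rewrite -E0 e0L.
have cardNL : #|N| = #|L|.
  have injN : {in N &, injective sig} by move=> a b aN bN; apply: sig_inj; exact: NE.
  have injL : {in L &, injective sig} by move=> a b aN bN; apply: sig_inj; exact: LE.
  apply/eqP; rewrite eqn_leq; apply/andP; split.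
    rewrite -(card_in_imset injN); apply: subset_leq_card; apply/subsetP => y.
    by case/imsetP => g gN ->; exact: sigN_L.
  rewrite -(card_in_imset injL); apply: subset_leq_card; apply/subsetP => y.
  by case/imsetP => g gN ->; exact: sigL_N.
set U := (N :\ f0) :|: (L :\ e0).
have Uneq g : g \in U -> (g != f0) && (g != e0).
  rewrite in_setU !in_setD1 => /orP [/andP [gf gN] | /andP [ge gL]].
    by rewrite gf /=; apply/eqP => E0; move: (NL _ gN); rewrite E0 e0L.
  by rewrite ge andbT; apply/eqP => E0; move: f0L; rewrite -E0 gL.
pose F g := if g \in L then ev g + ev f0 else ev g + ev e0.
have Fval g h : g != f0 -> g != e0 -> F h g = (g == h)%:R.
  by move=> gf ge; rewrite /F; case: ifP => _; rewrite ffunE !evE ?(negbTE gf) ?(negbTE ge) addr0.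
have fr : free (map F (enum U ++ [:: e0])).
  apply: triF_free; rewrite triF_cat; apply/and3P; split.
  - apply: triF_diag; first exact: enum_uniq.
      by move=> g; rewrite mem_enum => /Uneq /andP [gf ge]; rewrite Fval // eqxx oner_neq0.
    by move=> g h; rewrite mem_enum => /Uneq /andP [gf ge] _ gh; rewrite Fval // (negbTE gh).
  - by rewrite /= andbT /F e0L ffunE !evE eqxx (negbTE e0f0) addr0 oner_neq0.
  - apply/allP => g; rewrite mem_enum => /Uneq /andP [gf ge] /=.
    by rewrite andbT Fval // (negbTE ge).
have B1 l : l \in L -> ev l + ev f0 \in <<map F (enum U ++ [:: e0])>>%VS.
  move=> lL; have -> : ev l + ev f0 = F l by rewrite /F lL.
  apply: memv_span; apply: map_f; rewrite mem_cat mem_enum in_setU !in_setD1 in_cons.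
  case: (eqVneq l e0) => [E0|le]; first by rewrite E0 /= orbT.
  by apply/orP; left; apply/orP; right; rewrite lL andbT.
have B2 f : f \in N -> ev f + ev e0 \in <<map F (enum U ++ [:: e0])>>%VS.
  case: (eqVneq f f0) => [->|ff] fN; first by rewrite addrC; apply: B1 e0L.
  have -> : ev f + ev e0 = F f by rewrite /F (negbTE (NL _ fN)).
  apply: memv_span; apply: map_f; rewrite mem_cat mem_enum in_setU !in_setD1 ff fN //.
have -> : W = <<map F (enum U ++ [:: e0])>>%VS.
  apply/eqP; rewrite eqEsubv; apply/andP; split; apply/span_subvP => v.
    case/allpairsPdep => l [f [lE fE ->]]; move: lE fE.
    rewrite mem_enum mem_filter mem_enum => lL /andP [h _].
    have fN : f \in N by apply/NP; exists l.
    rewrite pairvE ?(inA_neq _ _ h) //.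
    have -> : ev l + ev f = (ev l + ev f0) + (ev f + ev e0) - (ev e0 + ev f0)
      by rewrite (addrC (ev e0)) addrACA addrK.
    by apply: memvB; [apply: memvD; [apply: B1 | apply: B2] | apply: B1 e0L].
  case/mapP => g gr ->; rewrite /F; case: ifP => gL.
    exact: memW_LN _ _ gL f0N.
  have gN : g \in N.
    move: gr; rewrite mem_cat mem_enum in_setU !in_setD1 mem_seq1 gL andbF orbF.
    by case/orP => [/andP [_ ->] // | /eqP ge]; move: gL; rewrite ge e0L.
  by rewrite addrC; exact: memW_LN _ _ e0L gN.
rewrite (eqP fr) size_map size_cat /= -cardE.
have cU : #|U| = (#|N :\ f0| + #|L :\ e0|)%N.
  have I0 : (N :\ f0) :&: (L :\ e0) = set0.
    apply/setP => g; rewrite in_setI !in_setD1 in_set0.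
    by case gN: (g \in N); rewrite ?andbF //= (negbTE (NL _ gN)) !andbF.
  by rewrite cardsU I0 cards0 subn0.
move: cU (cardsD1 f0 N) (cardsD1 e0 L) cardNL; rewrite f0N e0L /= -subn1. move=> h1 h2 h3 h4; rewrite h1 h3; move: h2; rewrite h4 h3; set a := #|L :\ e0|; set b := #|N :\ f0|.
lia.
Qed.
End Basics.

Theorem mainTheorem8 (R : realFieldType) (n : nat) (x : vec R n)
  (A : pred (vec R n)) (L Lstar : {set (darc n)}) :
  (4 <= n)%N ->
  inPn x -> half_integral x ->
  (forall v, inD x v -> v \in A) ->
  (forall v, v \in A -> inD x v \/ inT x v) ->
  circuit x A L ->
  is_dual x A L Lstar ->
  \dim (<< bracket x A L Lstar >>)%VS =
    (if Lstar == L then #|L| else (2 * #|L|).-1)%N.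
Proof.
move=> _ hP hh hD _ [e0 [he0 hL]] [hLs hN].
by eapply main_dim; eassumption.
Qed.
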